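(* Let $V$ be a real vector space of dimension $m=p+q\ge 3$ equipped with a non-degenerate symmetric inner product $(\cdot,\cdot)$ of signature $(p,q)$ (arbitrary), let $R$ be an algebraic curvature tensor on $V$, and let $1\le k\le m-1$. If $R$ is $k$ Osserman, then $\mathcal{J}_R(x)$ is nilpotent for every complex null vector $x\in\mathcal{N}$.
   Context: An algebraic curvature tensor is $R\in\otimes^4V^*$ with $R(x,y,z,w)=R(z,w,x,y)=-R(y,x,z,w)$ and $R(x,y,z,w)+R(y,z,x,w)+R(z,x,y,w)=0$. The Jacobi operator $\mathcal{J}_R(x)$ is the linear map of $V$ defined by $(\mathcal{J}_R(x)y,w)=R(y,x,x,w)$. For a non-degenerate $k$-dimensional subspace $\sigma\subset V$ with orthonormal basis $\{e_1,\dots,e_k\}$, the higher order Jacobi operator is $\mathcal{J}_R(\sigma)=\sum_{i=1}^k (e_i,e_i)\mathcal{J}_R(e_i)$ (independent of the orthonormal basis). $R$ is called $k$ Osserman if the eigenvalues of $\mathcal{J}_R(\sigma)$ are constant on the Grassmannian of non-degenerate $k$-planes $\sigma\subset V$. The inner product, $R$ and $\mathcal{J}_R$ are extended complex-multilinearly to $V_{\mathbb{C}}=V\otimes\mathbb{C}$; $\mathcal{N}=\{v\in V_{\mathbb{C}}:(v,v)=0\}$ is the set of complex null vectors. A linear map $A$ of $V_{\mathbb{C}}$ is nilpotent if $A^m=0$, equivalently $\operatorname{trace}(A^i)=0$ for $1\le i\le m$. *)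

(* Defs.v *)
From HB Require Import structures.
From mathcomp Require Import all_boot all_order all_algebra.
From mathcomp Require Import reals.
From mathcomp.real_closed Require Import complex.
Set Implicit Arguments. Unset Strict Implicit. Unset Printing Implicit Defensive.
Import Order.TTheory GRing.Theory Num.Theory.
Local Open Scope ring_scope.

(* V = F^m as column vectors 'cV[F]_m, with the symmetric bilinear form
   (u, w) = u^T G w given by a Gram matrix G. Everything is defined over an arbitrary field F so that it can be
   used both over the reals and (after complexification) over R[i]. *)

Section Defs.
Variable F : fieldType.
Variable m : nat.

Definition ip (G : 'M[F]_m) (u w : 'cV[F]_m) : F := (u^T *m G *m w) 0 0.

Definition tensor4 := 'I_m -> 'I_m -> 'I_m -> 'I_m -> F.

Definition tform (T : tensor4) (x y z w : 'cV[F]_m) : F :=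
  \sum_(i < m) \sum_(j < m) \sum_(k < m) \sum_(l < m)
     T i j k l * x i 0 * y j 0 * z k 0 * w l 0.

Definition is_alg_curv (T : tensor4) : Prop :=
  (forall x y z w, tform T x y z w = tform T z w x y) /\
  (forall x y z w, tform T x y z w = - tform T y x z w) /\
  (forall x y z w, tform T x y z w + tform T y z x w + tform T z x y w = 0).

(* Jacobi operator: the matrix J (acting y |-> J *m y) characterised by
   (J y, w) = R(y, x, x, w); explicitly J = G^{-1} N^T with
   N j l = R(e_j, x, x, e_l). *)
Definition jacobi (G : 'M[F]_m) (T : tensor4) (x : 'cV[F]_m) : 'M[F]_m :=
  invmx G *m (\matrix_(j < m, l < m)
                 tform T (delta_mx j 0) x x (delta_mx l 0))^T.

Definition orthonormal (G : 'M[F]_m) (k : nat) (e : 'I_k -> 'cV[F]_m) : Prop :=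
  forall i j : 'I_k,
    ip G (e i) (e j) = (if i == j then ip G (e i) (e i) else 0) /\
    (ip G (e i) (e i) = 1 \/ ip G (e i) (e i) = -1).

Definition hjacobi (G : 'M[F]_m) (T : tensor4) (k : nat) (e : 'I_k -> 'cV[F]_m)
  : 'M[F]_m := \sum_(i < k) ip G (e i) (e i) *: jacobi G T (e i).

Definition nilpotent (A : 'M[F]_m) : Prop := A ^+ m = 0.
End Defs.

Section Complex.
Variable R : realType.
Variable m : nat.
Local Open Scope complex_scope.

Definition cplx (r : R) : R[i] := r%:C.
Definition cG (G : 'M[R]_m) : 'M[R[i]]_m := map_mx cplx G.
Definition cT (T : tensor4 R m) : tensor4 R[i] m := fun i j k l => cplx (T i j k l).

Definition eigenvalues (A : 'M[R]_m) : pred R[i] :=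
  fun z => root (char_poly (map_mx cplx A)) z.

(* R is k Osserman: the eigenvalues of J_R(sigma) are the same for all
   non-degenerate k-planes sigma (given by orthonormal bases) *)
Definition k_osserman (G : 'M[R]_m) (T : tensor4 R m) (k : nat) : Prop :=
  forall e f : 'I_k -> 'cV[R]_m, orthonormal G e -> orthonormal G f ->
    eigenvalues (hjacobi G T e) =1 eigenvalues (hjacobi G T f).

Definition cnull (G : 'M[R]_m) (x : 'cV[R[i]]_m) : Prop := ip (cG G) x x = 0.
End Complex.

(* Main.v *)
Require Import Defs.
From HB Require Import structures.
From mathcomp Require Import all_boot all_order all_algebra.
From mathcomp Require Import reals.
From mathcomp.real_closed Require Import complex.
From mathcomp Require Import ring zify.
From Stdlib Require Import Classical.
Set Implicit Arguments. Unset Strict Implicit. Unset Printing Implicit Defensive.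
Import GRing.Theory Num.Theory.
Local Open Scope ring_scope.

Section Gen.
Variable F : fieldType.
Variable m : nat.
Implicit Types (G : 'M[F]_m) (u v w x y z : 'cV[F]_m).

Lemma ipE G u w : ip G u w = \sum_i \sum_j u i 0 * G i j * w j 0.
Proof.
rewrite /ip mxE exchange_big /=; apply: eq_bigr => j _.
rewrite mxE big_distrl /=; apply: eq_bigr => i _; rewrite !mxE.
by [].
Qed.

Lemma ipDl G u v w : ip G (u + v) w = ip G u w + ip G v w.
Proof.
rewrite !ipE -big_split; apply: eq_bigr => i _; rewrite -big_split.
by apply: eq_bigr => j _; rewrite !mxE /=; ring.
Qed.

Lemma ipDr G u v w : ip G w (u + v) = ip G w u + ip G w v.
Proof.
rewrite !ipE -big_split; apply: eq_bigr => i _; rewrite -big_split.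
by apply: eq_bigr => j _; rewrite !mxE /=; ring.
Qed.

Lemma ipZl G a u w : ip G (a *: u) w = a * ip G u w.
Proof.
rewrite !ipE mulr_sumr; apply: eq_bigr => i _; rewrite mulr_sumr.
by apply: eq_bigr => j _; rewrite !mxE /=; ring.
Qed.

Lemma ipZr G a u w : ip G w (a *: u) = a * ip G w u.
Proof.
rewrite !ipE mulr_sumr; apply: eq_bigr => i _; rewrite mulr_sumr.
by apply: eq_bigr => j _; rewrite !mxE /=; ring.
Qed.

Lemma ipNl G u w : ip G (- u) w = - ip G u w.
Proof. by rewrite -scaleN1r ipZl mulN1r. Qed.
Lemma ipNr G u w : ip G w (- u) = - ip G w u.
Proof. by rewrite -scaleN1r ipZr mulN1r. Qed.
Lemma ipBl G u v w : ip G (u - v) w = ip G u w - ip G v w.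
Proof. by rewrite ipDl ipNl. Qed.
Lemma ipBr G u v w : ip G w (u - v) = ip G w u - ip G w v.
Proof. by rewrite ipDr ipNr. Qed.

Lemma ipC G u w : G^T = G -> ip G u w = ip G w u.
Proof.
move=> sG; rewrite !ipE exchange_big; apply: eq_bigr => i _.
apply: eq_bigr => j _; rewrite -{1}sG !mxE; ring.
Qed.

Lemma tformZ T e a x y e' :
  tform T e (a *: x) (a *: y) e' = a ^+ 2 * tform T e x y e'.
Proof.
rewrite /tform mulr_sumr; apply: eq_bigr => i _; rewrite mulr_sumr.
apply: eq_bigr => j _; rewrite mulr_sumr; apply: eq_bigr => k _.
rewrite mulr_sumr; apply: eq_bigr => l _; rewrite !mxE; ring.
Qed.

Lemma jacobiZ G T a x : jacobi G T (a *: x) = a ^+ 2 *: jacobi G T x.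
Proof.
rewrite /jacobi scalemxAr; congr (_ *m _).
rewrite -linearZ /=; congr (_^T); apply/matrixP => i j; rewrite !mxE.
by rewrite tformZ.
Qed.

End Gen.

Section PF.
Variable F : fieldType.
Variable m : nat.

Definition PF (f : 'cV[F]_m -> F) :=
  forall a b : 'cV[F]_m, exists p : {poly F}, forall t, f (a + t *: b) = p.[t].
Definition PFM r c (A : 'cV[F]_m -> 'M[F]_(r, c)) :=
  forall i j, PF (fun w => A w i j).

Lemma PF_const c : PF (fun _ => c).
Proof. by move=> a b; exists c%:P => t; rewrite hornerC. Qed.

Lemma PF_add f g : PF f -> PF g -> PF (fun w => f w + g w).
Proof.
move=> hf hg a b; have [p hp] := hf a b; have [q hq] := hg a b.
by exists (p + q) => t; rewrite hornerD hp hq.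
Qed.

Lemma PF_mul f g : PF f -> PF g -> PF (fun w => f w * g w).
Proof.
move=> hf hg a b; have [p hp] := hf a b; have [q hq] := hg a b.
by exists (p * q) => t; rewrite hornerM hp hq.
Qed.

Lemma PF_opp f : PF f -> PF (fun w => - f w).
Proof.
move=> hf a b; have [p hp] := hf a b.
by exists (- p) => t; rewrite hornerN hp.
Qed.

Lemma PF_sum (I : Type) (r : seq I) (P : pred I) (f : I -> 'cV[F]_m -> F) :
  (forall i, PF (f i)) -> PF (fun w => \sum_(i <- r | P i) f i w).
Proof.
move=> hf; elim: r => [|i r IH].
  by move=> a b; exists 0 => t; rewrite big_nil horner0.
move=> a b.
case Pi: (P i).
  have [p hp] := hf i a b; have [q hq] := IH a b.
  by exists (p + q) => t; rewrite big_cons Pi hornerD hp hq.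
have [q hq] := IH a b; by exists q => t; rewrite big_cons Pi hq.
Qed.

Lemma PFM_id : PFM (fun w : 'cV[F]_m => w).
Proof.
move=> i j a b; exists ((a i j)%:P + b i j *: 'X) => t.
by rewrite !mxE hornerD hornerC hornerZ hornerX mulrC.
Qed.


Lemma PFM_const r c (A : 'M[F]_(r, c)) : PFM (fun _ => A).
Proof. by move=> i j; apply: PF_const. Qed.

Lemma PFM_matrix r c (f : 'I_r -> 'I_c -> 'cV[F]_m -> F) :
  (forall i j, PF (f i j)) -> PFM (fun w => \matrix_(i, j) f i j w).
Proof.
move=> hf i j a b; have [p hp] := hf i j a b.
by exists p => t; rewrite mxE hp.
Qed.

Lemma PFM_add r c (A B : 'cV[F]_m -> 'M[F]_(r, c)) :
  PFM A -> PFM B -> PFM (fun w => A w + B w).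
Proof.
move=> hA hB i j a b; have [p hp] := hA i j a b; have [q hq] := hB i j a b.
by exists (p + q) => t; rewrite mxE hornerD hp hq.
Qed.

Lemma PFM_scale r c (s : 'cV[F]_m -> F) (A : 'cV[F]_m -> 'M[F]_(r, c)) :
  PF s -> PFM A -> PFM (fun w => s w *: A w).
Proof.
move=> hs hA i j a b; have [p hp] := hs a b; have [q hq] := hA i j a b.
by exists (p * q) => t; rewrite mxE hornerM hp hq.
Qed.

Lemma PFM_opp r c (A : 'cV[F]_m -> 'M[F]_(r, c)) :
  PFM A -> PFM (fun w => - A w).
Proof.
move=> hA i j a b; have [p hp] := hA i j a b.
by exists (- p) => t; rewrite mxE hornerN hp.
Qed.

Lemma PFM_mul r c d (A : 'cV[F]_m -> 'M[F]_(r, c)) (B : 'cV[F]_m -> 'M[F]_(c, d)) :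
  PFM A -> PFM B -> PFM (fun w => A w *m B w).
Proof.
move=> hA hB i j.
have := @PF_sum _ (index_enum 'I_c) xpredT (fun k w => A w i k * B w k j).
move=> /(_ (fun k => PF_mul (hA i k) (hB k j))) h a b.
have [p hp] := h a b; by exists p => t; rewrite mxE -hp.
Qed.

Lemma PFM_tr r c (A : 'cV[F]_m -> 'M[F]_(r, c)) :
  PFM A -> PFM (fun w => (A w)^T).
Proof.
move=> hA i j a b; have [p hp] := hA j i a b.
by exists p => t; rewrite mxE hp.
Qed.

Lemma PFM_sum r c (I : Type) (s : seq I) (P : pred I)
   (A : I -> 'cV[F]_m -> 'M[F]_(r, c)) :
  (forall i, PFM (A i)) -> PFM (fun w => \sum_(i <- s | P i) A i w).
Proof.
move=> hA i j.
have := @PF_sum _ s P (fun k w => A k w i j) (fun k => hA k i j).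
move=> h a b; have [p hp] := h a b; exists p => t.
by rewrite summxE -hp.
Qed.

Lemma PFM_exp n (A : 'cV[F]_m -> 'M[F]_n) k :
  PFM A -> PFM (fun w => A w ^+ k).
Proof.
move=> hA; elim: k => [|k IH].
  by move=> i j a b; exists (((1 : 'M[F]_n) i j)%:P) => t; rewrite expr0 hornerC.
move=> i j a b.
have := PFM_mul hA IH i j a b => -[p hp]; exists p => t.
by rewrite exprS -mulmxE -hp.
Qed.

Lemma PF_entry r c (A : 'cV[F]_m -> 'M[F]_(r, c)) i j :
  PFM A -> PF (fun w => A w i j).
Proof. by move=> hA; apply: hA. Qed.

Lemma PF_ip G (V U : 'cV[F]_m -> 'cV[F]_m) :
  PFM V -> PFM U -> PF (fun w => ip G (V w) (U w)).
Proof.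
move=> hV hU; rewrite /ip.
have := PFM_mul (PFM_mul (PFM_tr hV) (PFM_const G)) hU 0 0.
by [].
Qed.

Lemma PF_tform T x y (V U : 'cV[F]_m -> 'cV[F]_m) :
  PFM V -> PFM U -> PF (fun w => tform T x (V w) (U w) y).
Proof.
move=> hV hU; rewrite /tform.
apply: PF_sum => i; apply: PF_sum => j; apply: PF_sum => k; apply: PF_sum => l.
apply: PF_mul; last exact: PF_const.
apply: PF_mul; last exact: hU.
apply: PF_mul; last exact: hV.
exact: PF_const.
Qed.

Lemma PFM_jacobi G T (V : 'cV[F]_m -> 'cV[F]_m) :
  PFM V -> PFM (fun w => jacobi G T (V w)).
Proof.
move=> hV; rewrite /jacobi; apply: PFM_mul; first exact: PFM_const.
apply: PFM_tr; apply: PFM_matrix => i j; exact: PF_tform.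
Qed.

End PF.

Section Gen2.
Variable F : fieldType.
Variable m k : nat.
Implicit Types (G : 'M[F]_m) (T : tensor4 F m) (u v w x y : 'cV[F]_m).

Definition refl G w x := x - (2 * ip G x w / ip G w w) *: w.

Lemma refl_ip G w x y : G^T = G -> ip G w w != 0 ->
  ip G (refl G w x) (refl G w y) = ip G x y.
Proof.
move=> sG qn0; rewrite /refl !(ipBl, ipBr, ipZl, ipZr).
rewrite (ipC w y sG).
by field.
Qed.

Lemma reflE G w x : ip G w w != 0 ->
  refl G w x = (ip G w w)^-1 *: (ip G w w *: x - (2 * ip G x w) *: w).
Proof.
move=> qn0; rewrite /refl scalerBr !scalerA mulVf // scale1r.
by congr (_ - _ *: _); rewrite mulrC.
Qed.

Definition Mfun G T (fr : 'I_k -> 'cV[F]_m) w :=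
  \sum_(l < k) ip G (fr l) (fr l) *:
      jacobi G T (ip G w w *: fr l - (2 * ip G (fr l) w) *: w).

Definition Qfun G T fr (d : {poly F}) w :=
  \sum_(i < size d) (d`_i * ip G w w ^+ (2 * ((size d).-1 - i))) *:
       Mfun G T fr w ^+ i.

Lemma hjacobi_refl G T fr w : G^T = G -> ip G w w != 0 ->
  hjacobi G T (fun l => refl G w (fr l)) = (ip G w w ^+ 2)^-1 *: Mfun G T fr w.
Proof.
move=> sG qn0; rewrite /hjacobi /Mfun scaler_sumr; apply: eq_bigr => l _.
rewrite refl_ip // reflE // jacobiZ scalerA scalerA; congr (_ *: _).
by rewrite exprVn mulrC.
Qed.

Lemma PF_exp (f : 'cV[F]_m -> F) n : PF f -> PF (fun w => f w ^+ n).
Proof.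
move=> hf; elim: n => [|n IH]; first by apply: (PF_const (1 : F)).
have := PF_mul hf IH => h a b; have [p hp] := h a b.
by exists p => t; rewrite exprS hp.
Qed.

Lemma PFM_Mfun G T fr : PFM (fun w => Mfun G T fr w).
Proof.
rewrite /Mfun; apply: PFM_sum => l; apply: PFM_scale; first exact: PF_const.
apply: PFM_jacobi; apply: PFM_add.
  apply: PFM_scale; last exact: PFM_const.
  exact: (@PF_ip _ _ G (fun w => w) (fun w => w) (@PFM_id _ _) (@PFM_id _ _)).
apply: PFM_opp; apply: PFM_scale; last exact: PFM_id.
by apply: PF_mul; [exact: PF_const | exact: (@PF_ip _ _ G (fun _ => fr l) (fun w => w) (PFM_const _) (@PFM_id _ _))].
Qed.

Lemma PFM_Qfun G T fr d : PFM (fun w => Qfun G T fr d w).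
Proof.
have hq : PF (fun w => ip G w w).
  exact: (@PF_ip _ _ G (fun w => w) (fun w => w) (@PFM_id _ _) (@PFM_id _ _)).
rewrite /Qfun; apply: PFM_sum => i; apply: PFM_scale.
  apply: PF_mul; first exact: PF_const.
  exact: (PF_exp _ hq).
by apply: PFM_exp; exact: PFM_Mfun.
Qed.

Lemma Mfun_null G T fr w : ip G w w = 0 ->
  Mfun G T fr w = (4 * \sum_(l < k) ip G (fr l) (fr l) * ip G (fr l) w ^+ 2)
                    *: jacobi G T w.
Proof.
move=> q0; rewrite /Mfun mulr_sumr scaler_suml.
apply: eq_bigr => l _; rewrite q0 scale0r sub0r -scaleNr jacobiZ scalerA; congr (_ *: _).
ring.
Qed.

Lemma Qfun_null G T fr d w : ip G w w = 0 -> d \is monic ->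
  Qfun G T fr d w = Mfun G T fr w ^+ (size d).-1.
Proof.
move=> q0 md; rewrite /Qfun q0.
have szd : size d = (size d).-1.+1.
  by rewrite prednK // lt0n size_poly_eq0 monic_neq0.
rewrite szd big_ord_recr /= big1 ?add0r.
  by rewrite subnn muln0 expr0 mulr1 -lead_coefE (monicP md) scale1r.
move=> i _; rewrite expr0n /=.
have : ((size d).-1 - i != 0)%N by rewrite subn_eq0 -ltnNge ltn_ord.
by rewrite muln_eq0 /= => /negbTE ->; rewrite mulr0 scale0r.
Qed.

End Gen2.

Lemma horner_mx_sum (F : comNzRingType) n (A : 'M[F]_n.+1) (p : {poly F}) :
  horner_mx A p = \sum_(i < size p) p`_i *: A ^+ i.
Proof.
rewrite -{1}(coefK p) poly_def rmorph_sum; apply: eq_bigr => i _.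
rewrite -mul_polyC rmorphM rmorphXn /= horner_mx_C horner_mx_X.
by rewrite -mulmxE mul_scalar_mx.
Qed.

Section Cplx.
Variable R : realType.
Local Notation C := R[i].
HB.instance Definition _ := GRing.RMorphism.copy (@cplx R) (real_complex R).
Check (@cplx R : {rmorphism R -> C}).
Variable m : nat.
Local Notation cv := (map_mx (@cplx R)).

Lemma ip_cplx (G : 'M[R]_m) u w : ip (cG G) (cv u) (cv w) = cplx (ip G u w).
Proof.
rewrite !ipE rmorph_sum; apply: eq_bigr => i _; rewrite rmorph_sum.
by apply: eq_bigr => j _; rewrite !rmorphM !mxE.
Qed.

Lemma tform_cplx (T : tensor4 R m) x y z w :
  tform (cT T) (cv x) (cv y) (cv z) (cv w) = cplx (tform T x y z w).
Proof.
rewrite /tform rmorph_sum; apply: eq_bigr => i _; rewrite rmorph_sum.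
apply: eq_bigr => j _; rewrite rmorph_sum; apply: eq_bigr => k _.
rewrite rmorph_sum; apply: eq_bigr => l _; rewrite !rmorphM !mxE.
by [].
Qed.

Lemma jacobi_cplx (G : 'M[R]_m) T x :
  jacobi (cG G) (cT T) (cv x) = map_mx (@cplx R) (jacobi G T x).
Proof.
rewrite /jacobi map_mxM map_invmx -map_trmx; congr (_ *m _^T).
apply/matrixP => i j; rewrite !mxE.
have := tform_cplx T (delta_mx i 0) x x (delta_mx j 0).
by rewrite !map_delta_mx.
Qed.

End Cplx.

Section Cplx2.
Variable R : realType.
Variable m k : nat.
Local Notation cv := (map_mx (@cplx R)).

Lemma cv_lin (a b : R) (x w : 'cV[R]_m) :
  cv (a *: x - b *: w) = cplx a *: cv x - cplx b *: cv w.
Proof. by rewrite map_mxD map_mxN !map_mxZ. Qed.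

Lemma Mfun_cplx (G : 'M[R]_m) T (fr : 'I_k -> 'cV[R]_m) w :
  map_mx (@cplx R) (Mfun G T fr w) =
  Mfun (cG G) (cT T) (fun l => cv (fr l)) (cv w).
Proof.
rewrite /Mfun map_mx_sum; apply: eq_bigr => l _.
rewrite map_mxZ -jacobi_cplx !ip_cplx; congr (_ *: _).
by rewrite cv_lin rmorphM rmorph_nat.
Qed.

End Cplx2.

Lemma poly_nat_roots (F : numDomainType) (p : {poly F}) :
  (forall n : nat, p.[n%:R] = 0) -> p = 0.
Proof.
move=> hp; apply/eqP; apply/negPn/negP => pn0.
have hall : all (root p) [seq (i%:R : F) | i <- iota 0 (size p)].
  by apply/allP => x /mapP [i _ ->]; rewrite /root hp.
have hu : uniq [seq (i%:R : F) | i <- iota 0 (size p)].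
  rewrite map_inj_uniq ?iota_uniq // => i j /eqP; rewrite eqr_nat => /eqP.
  by [].
have := max_poly_roots pn0 hall hu.
by rewrite size_map size_iota ltnn.
Qed.

Section Ext.
Variable R : realType.
Local Notation C := R[i].
Variable m : nat.

Lemma PF_real_ext (f : 'cV[C]_m -> C) :
  PF f -> (forall r : 'cV[R]_m, f (map_mx (@cplx R) r) = 0) ->
  forall w, f w = 0.
Proof.
move=> hf h0.
suff: forall n, (n <= m)%N -> forall w : 'cV[C]_m,
   (forall j : 'I_m, (n <= j)%N -> exists x : R, w j 0 = cplx x) -> f w = 0.
  by move=> H w; apply: (H m) => // j; rewrite leqNgt ltn_ord.
elim=> [_ |n IH ltnm] w hw.
  have -> : w = map_mx (@cplx R) (\matrix_(i, j) complex.Re (w i j)).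
    apply/matrixP => i j; rewrite !mxE (ord1 j).
    by have [x ->] := hw i (leq0n _).
  exact: h0.
have ltn : (n < m)%N by [].
pose jn := Ordinal ltn.
pose b : 'cV[C]_m := delta_mx jn 0.
pose a := w - (w jn 0) *: b.
have [p hp] := hf a b.
have p0 : p = 0.
  apply: poly_nat_roots => k; rewrite -hp; apply: IH; first exact: ltnW.
  move=> j lenj; rewrite /a /b !mxE.
  case: (eqVneq j jn) => [->|njn].
    rewrite !eqxx /= mulr1 subrr add0r mulr1.
    by exists (k%:R); rewrite rmorph_nat.
  have : (n.+1 <= j)%N.
    rewrite ltn_neqAle lenj andbT; apply: contra_neq njn => nj.
    by apply: val_inj.
  move=> /hw [x ->]; exists x.
  by rewrite /= !mulr0 subr0 addr0.
have -> : w = a + (w jn 0) *: b by rewrite /a subrK.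
by rewrite hp p0 horner0.
Qed.

End Ext.

Section Eig.
Variable F : closedFieldType.

Lemma prod_roots_dvd (c : {poly F}) (rs : seq F) :
  all (root c) rs -> \prod_(z <- rs) ('X - z%:P) %| c ^+ size rs.
Proof.
elim: rs => [|z rs IH] /=; first by rewrite big_nil dvd1p.
move=> /andP [rz hrs]; rewrite big_cons exprS.
by apply: dvdp_mul; [rewrite dvdp_XsubCl | exact: IH].
Qed.

Lemma roots_incl_horner n (B : 'M[F]_n.+1) (c : {poly F}) :
  (forall z, root (char_poly B) z -> root c z) -> horner_mx B (c ^+ n.+1) = 0.
Proof.
move=> hroots.
have [rs hrs] := closed_field_poly_normal (char_poly B).
move: hrs; rewrite (monicP (char_poly_monic B)) scale1r => hrs.
have szrs : size rs = n.+1.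
  have := size_char_poly B; rewrite hrs size_prod_XsubC.
  by case.
have hall : all (root c) rs.
  apply/allP => z zin; apply: hroots.
  by rewrite hrs root_prod_XsubC.
have := prod_roots_dvd hall; rewrite -hrs szrs => /dvdpP [g ->].
by rewrite rmorphM /= Cayley_Hamilton mulr0.
Qed.

Lemma nilp_bound n (B : 'M[F]_n.+1) N : B ^+ N = 0 -> B ^+ n.+1 = 0.
Proof.
move=> hN.
have := @roots_incl_horner n B 'X.
rewrite rmorphXn /= horner_mx_X; apply => z.
rewrite -eigenvalue_root_char => /eigenvalueP [v hv vn0].
rewrite rootX.
have : v *m B ^+ N = z ^+ N *: v.
  elim: N {hN} => [|N IH]; first by rewrite expr0 mulmx1 expr0 scale1r.
  by rewrite exprSr -mulmxE mulmxA IH -scalemxAl hv scalerA -exprSr.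
rewrite hN mulmx0 => /esym/eqP; rewrite scaler_eq0 (negbTE vn0) orbF.
by rewrite expf_eq0 => /andP [_ ->].
Qed.

End Eig.

Section ON.
Variable F : fieldType.
Variable n : nat.
Implicit Types (G : 'M[F]_n) (u v w : 'cV[F]_n).

Lemma ip0r G w : ip G w 0 = 0.
Proof. by rewrite -(scale0r (0 : 'cV[F]_n)) ipZr mul0r. Qed.
Lemma ip0l G w : ip G 0 w = 0.
Proof. by rewrite -(scale0r (0 : 'cV[F]_n)) ipZl mul0r. Qed.

Lemma ip_sumr G w (I : Type) (r : seq I) (P : pred I) (f : I -> 'cV[F]_n) :
  ip G w (\sum_(i <- r | P i) f i) = \sum_(i <- r | P i) ip G w (f i).
Proof. by apply: (big_morph (fun x => ip G w x)); [move=> x y; exact: ipDr | exact: ip0r]. Qed.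

Lemma ip_suml G w (I : Type) (r : seq I) (P : pred I) (f : I -> 'cV[F]_n) :
  ip G (\sum_(i <- r | P i) f i) w = \sum_(i <- r | P i) ip G (f i) w.
Proof. by apply: (big_morph (fun x => ip G x w)); [move=> x y; exact: ipDl | exact: ip0l]. Qed.

Definition ONf G r (f : nat -> 'cV[F]_n) :=
  (forall i j, (i < r)%N -> (j < r)%N -> i != j -> ip G (f i) (f j) = 0) /\
  (forall i, (i < r)%N -> ip G (f i) (f i) = 1 \/ ip G (f i) (f i) = -1).

Lemma ip_nondeg G x : G \in unitmx -> (forall v, ip G x v = 0) -> x = 0.
Proof.
move=> uG h.
have hx : x^T *m G = 0.
  apply/matrixP => i j; rewrite (ord1 i).
  have := h (delta_mx j 0); rewrite /ip -colE mxE => ->.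
  by rewrite mxE.
apply: trmx_inj; rewrite trmx0.
by rewrite -(mulmxK uG (x^T)) hx mul0mx.
Qed.

End ON.

Section ONR.
Variable R : rcfType.
Variable n : nat.
Implicit Types (G : 'M[R]_n) (u v w : 'cV[R]_n).

Lemma ON_step G r f : G^T = G -> G \in unitmx -> (r < n)%N -> ONf G r f ->
  exists h, ONf G r.+1 (fun i => if i == r then h else f i).
Proof.
move=> sG uG ltrn [ON1 ON2].
pose eps i := ip G (f i) (f i).
have eps2 : forall i, (i < r)%N -> eps i * eps i = 1.
  by move=> i /ON2 []; rewrite /eps => ->; rewrite ?mulr1 ?mulrNN ?mulr1.
pose S v := \sum_(i < r) (eps i * ip G (f i) v) *: f i.
pose pi v := v - S v.
have orth : forall v j, (j < r)%N -> ip G (f j) (pi v) = 0.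
  move=> v j hj; rewrite /pi /S ipBr ip_sumr (bigD1 (Ordinal hj)) //=.
  rewrite big1 ?addr0.
    rewrite ipZr -/(eps j) mulrAC eps2 // mul1r subrr //.
  move=> i /= nij; rewrite ipZr ON1 ?mulr0 //.
  by apply: contraNneq _ nij => ji; apply/eqP; apply: val_inj; rewrite /= ji.
have linS : forall v v', S (v + v') = S v + S v'.
  move=> v v'; rewrite /S -big_split /=; apply: eq_bigr => i _.
  by rewrite ipDr mulrDr scalerDl.
have lin : forall v v', pi (v + v') = pi v + pi v'.
  by move=> v v'; rewrite /pi linS opprD addrACA.
have [v qv] : exists v, ip G (pi v) (pi v) != 0.
  apply: not_all_not_ex => H0.
  have {}H0 : forall v, ip G (pi v) (pi v) = 0.
    by move=> v; apply/eqP; apply/negPn/negP => hv; apply: (H0 v).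
  have H1 : forall v v', ip G (pi v) (pi v') = 0.
    move=> v vv; have := H0 (v + vv); rewrite lin ipDl (ipDr G (pi v) (pi vv)) (ipDr G (pi v) (pi vv)) !H0 add0r addr0.
    rewrite (ipC _ _ sG) -mulr2n => /eqP; rewrite mulrn_eq0 /= => /eqP.
    by rewrite (ipC _ _ sG).
  have H2 : forall v v', ip G (pi v) v' = 0.
    move=> v v'; have -> : v' = pi v' + S v' by rewrite /pi subrK.
    rewrite ipDr H1 add0r /S ip_sumr big1 // => i _.
    by rewrite ipZr (@ipC _ _ G (pi v) (f i) sG) orth ?mulr0.
  have H3 : forall v, v = S v.
    move=> v; apply/eqP; rewrite -subr_eq0; apply/eqP; exact: ip_nondeg uG (H2 v).
  pose Fm : 'M[R]_(n, r) := \matrix_(a, i) f i a 0.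
  pose X : 'M[R]_(r, n) := \matrix_(i, b) (eps i * ip G (f i) (delta_mx b 0)).
  have E : (1%:M : 'M[R]_n) = Fm *m X.
    apply/matrixP => a b; rewrite !mxE.
    have := congr1 (fun M : 'cV[R]_n => M a 0) (H3 (delta_mx b 0)).
    rewrite /= /S summxE !mxE eqxx andbT => ->.
    by apply: eq_bigr => i _; rewrite !mxE mulrC.
  have := mxrankM_maxl Fm X; rewrite -E mxrank1 => h1.
  have := rank_leq_col Fm => h2.
  by have := leq_trans h1 h2; rewrite leqNgt ltrn.
pose g := pi v.
pose s := Num.sqrt `|ip G g g|.
have s0 : s != 0 by rewrite sqrtr_eq0 normr_le0.
exists (s^-1 *: g); split.
  move=> i j hi hj nij.
  case: (eqVneq i r) => [ir|nir]; case: (eqVneq j r) => [jr|njr].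
  - by move: nij; rewrite ir jr eqxx.
  - by rewrite ipZl (ipC _ _ sG) orth ?mulr0 // -ltnS -[j.+1]/(j.+1) ltn_neqAle njr -ltnS.
  - by rewrite ipZr orth ?mulr0 // ltn_neqAle nir -ltnS.
  - by apply: ON1; rewrite // ltn_neqAle ?nir ?njr -ltnS.
move=> i hi; case: (eqVneq i r) => [ir|nir]; last first.
  by apply: ON2; rewrite ltn_neqAle nir -ltnS.
rewrite ipZl ipZr mulrA -expr2 exprVn sqr_sqrtr ?normr_ge0 //.
have qn0 : ip G g g != 0 by [].
case: (ltrgt0P (ip G g g)) => hq; last by move: qn0; rewrite hq eqxx.
  by left; rewrite mulVf.
by right; rewrite invrN mulNr mulVf.
Qed.

Lemma ON_exists G : G^T = G -> G \in unitmx -> exists f, ONf G n f.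
Proof.
move=> sG uG.
suff H : forall r, (r <= n)%N -> exists f, ONf G r f by apply: H.
elim=> [_|r IH hr]; first by exists (fun _ => 0); split.
have [f hf] := IH (ltnW hr).
have [h hh] := ON_step sG uG hr hf.
by eexists; exact: hh.
Qed.

End ONR.

Lemma scal_eq (F : fieldType) (Q d : F) N i : Q != 0 -> (i <= N)%N ->
  d * Q ^+ (2 * (N - i)) = Q ^+ (2 * N) * d * (Q ^+ 2)^-1 ^+ i.
Proof.
move=> Qn0 hi.
have e : (2 * N = 2 * (N - i) + 2 * i)%N by rewrite -mulnDr subnK.
rewrite e exprD exprVn -exprM.
have h2 : Q ^+ (2 * i) != 0 by rewrite expf_eq0 (negbTE Qn0) andbF.
move: h2; set A := Q ^+ (2 * _); set Bq := Q ^+ (2 * i) => h2.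
by field.
Qed.

Section Main.
Variable R : realType.
Local Notation C := R[i].
Variable n k : nat.
Local Notation m := n.+1.
Local Notation cv := (map_mx (@cplx R)).
Variable G : 'M[R]_m.
Variable T : tensor4 R m.
Hypothesis sG : G^T = G.
Hypothesis uG : G \in unitmx.
Hypothesis kOss : k_osserman G T k.
Variable f : nat -> 'cV[R]_m.
Hypothesis ONff : ONf G m f.
Variable phi : 'I_k -> nat.
Hypothesis phi_inj : injective phi.
Hypothesis phi_lt : forall l, (phi l < m)%N.

Definition fr l := f (phi l).
Definition frC l := cv (fr l).

Lemma fr_orth : Defs.orthonormal G fr.
Proof.
case: ONff => ON1 ON2 i j; split; last exact: ON2.
case: (eqVneq i j) => [->//|nij].
apply: ON1 => //; apply: contra_neq nij; exact: phi_inj.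
Qed.

Lemma frw_orth w : ip G w w != 0 -> Defs.orthonormal G (fun l => refl G w (fr l)).
Proof.
move=> qn0 i j; rewrite !refl_ip //; exact: fr_orth.
Qed.

Definition cpol := char_poly (cv (hjacobi G T fr)).
Definition dpol := cpol ^+ m.

Lemma dpol_monic : dpol \is monic.
Proof. by apply: monic_exp; apply: char_poly_monic. Qed.

Lemma Q_real w : ip G w w != 0 -> Qfun (cG G) (cT T) frC dpol (cv w) = 0.
Proof.
move=> qn0.
pose B := cv (hjacobi G T (fun l => refl G w (fr l))).
have hB : forall z, root (char_poly B) z -> root cpol z.
  move=> z; have := kOss (frw_orth qn0) fr_orth z.
  by rewrite /eigenvalues => ->.
have hh := roots_incl_horner hB.
pose Q := cplx (ip G w w).
have Qn0 : Q != 0 by rewrite fmorph_eq0.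
have eB : B = (Q ^+ 2)^-1 *: Mfun (cG G) (cT T) frC (cv w).
  rewrite /B hjacobi_refl // map_mxZ Mfun_cplx fmorphV rmorphXn.
  by [].
rewrite horner_mx_sum eB in hh.
have eQ : ip (cG G) (cv w) (cv w) = Q by rewrite ip_cplx.
rewrite /Qfun eQ.
apply: (@eq_trans _ _ (Q ^+ (2 * (size dpol).-1) *:
   \sum_(i < size dpol) dpol`_i *: ((Q ^+ 2)^-1 *: Mfun (cG G) (cT T) frC (cv w)) ^+ i)); last first.
  by rewrite hh scaler0.
rewrite scaler_sumr; apply: eq_bigr => i _.
rewrite exprZn !scalerA; congr (_ *: _).
have hi : (i <= (size dpol).-1)%N.
  by rewrite -ltnS prednK ?ltn_ord // (leq_ltn_trans _ (ltn_ord i)).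
exact: scal_eq.
Qed.



Lemma hq_PF : PF (fun w : 'cV[C]_m => ip (cG G) w w).
Proof. exact: (@PF_ip _ _ (cG G) (fun w => w) (fun w => w) (@PFM_id _ _) (@PFM_id _ _)). Qed.

Lemma Q_all (w : 'cV[C]_m) a b :
  ip (cG G) w w * Qfun (cG G) (cT T) frC dpol w a b = 0.
Proof.
pose g := fun w : 'cV[C]_m => ip (cG G) w w * Qfun (cG G) (cT T) frC dpol w a b.
suff : forall w, g w = 0 by apply.
apply: PF_real_ext.
  by apply: PF_mul; [exact: hq_PF | exact: PFM_Qfun].
move=> r; rewrite /g ip_cplx.
case: (eqVneq (ip G r r) 0) => [->|qn0]; first by rewrite rmorph0 mul0r.
by rewrite Q_real // mxE mulr0.
Qed.

Lemma Q_null (w0 : 'cV[C]_m) : ip (cG G) w0 w0 = 0 ->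
  Qfun (cG G) (cT T) frC dpol w0 = 0.
Proof.
move=> q0; apply/matrixP => a b; rewrite [RHS]mxE.
pose b0 := cv (f 0).
have e0 : ip (cG G) b0 b0 != 0.
  rewrite /b0 ip_cplx fmorph_eq0; case: ONff => _ /(_ 0%N (ltn0Sn _)) [] ->.
    exact: oner_neq0.
  by rewrite oppr_eq0 oner_neq0.
have [ph hph] := hq_PF w0 b0.
have [pg hpg] := PFM_Qfun (cG G) (cT T) frC dpol a b w0 b0.
have : ph * pg = 0.
  apply: poly_nat_roots => j; rewrite hornerM -hph -hpg; exact: Q_all.
move=> /eqP; rewrite mulf_eq0 => /orP [] /eqP hp.
  exfalso; move: e0.
  have ex : forall t, ip (cG G) (w0 + t *: b0) (w0 + t *: b0) =
     t * (ip (cG G) w0 b0 + ip (cG G) b0 w0) + t ^+ 2 * ip (cG G) b0 b0.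
    move=> t; rewrite !(ipDl, ipDr, ipZl, ipZr) q0; ring.
  have e1 := ex 1; have e2 := ex 2.
  rewrite hph hp horner0 in e1; rewrite hph hp horner0 in e2.
  set bb := ip _ w0 b0 + _ in e1 e2; set ee := ip _ b0 b0 in e1 e2 *.
  have : ee * 2 = (2 * bb + 2 ^+ 2 * ee) - 2 * (1 * bb + 1 ^+ 2 * ee) by ring.
  rewrite -e1 -e2 mulr0 subr0 => /eqP; rewrite mulf_eq0 pnatr_eq0 orbF => ->.
  by [].
have := hpg 0; rewrite scale0r addr0 => ->.
by rewrite hp horner0.
Qed.

Lemma J_nil (w0 : 'cV[C]_m) : ip (cG G) w0 w0 = 0 ->
  \sum_(l < k) ip (cG G) (frC l) (frC l) * ip (cG G) (frC l) w0 ^+ 2 != 0 ->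
  jacobi (cG G) (cT T) w0 ^+ m = 0.
Proof.
move=> q0 sn0.
have := Q_null q0; rewrite Qfun_null // ?Mfun_null // ?dpol_monic // exprZn.
move=> /eqP; rewrite scaler_eq0 expf_eq0 mulf_eq0 pnatr_eq0 (negbTE sn0) /=.
rewrite andbF /= => /eqP; exact: nilp_bound.
Qed.

End Main.

Lemma comb (F : numDomainType) (a : nat -> F) k m : (0 < k)%N -> (k < m)%N ->
  (forall phi : 'I_k -> nat, injective phi -> (forall l, (phi l < m)%N) ->
     \sum_(l < k) a (phi l) = 0) ->
  forall x, (x < m)%N -> a x = 0.
Proof.
move=> k0 km H.
pose S := \sum_(l < k.+1) a l.
have h2 : forall y : 'I_k.+1, a y = S.
  move=> y.
  have := H (fun l => val (lift y l)).
  have inj : injective (fun l : 'I_k => val (lift y l)).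
    by move=> i j /val_inj /lift_inj.
  have lt : forall l : 'I_k, (val (lift y l) < m)%N.
    by move=> l; apply: leq_trans km; exact: ltn_ord.
  move=> /(_ inj lt) h.
  by rewrite /S (bigD1_ord y) //= h addr0.
have S0 : S = 0.
  have : S = S *+ k.+1.
    have e : \sum_(l < k.+1) S = S *+ k.+1 by rewrite sumr_const card_ord.
    rewrite -e {1}/S; apply: eq_bigr => i _; exact: h2.
  rewrite mulrS -{1}(addr0 S) => /addrI /esym /eqP.
  by rewrite mulrn_eq0 eqn0Ngt k0 /= => /eqP.
have lowk : forall y, (y <= k)%N -> a y = 0.
  by move=> y hy; have := h2 (Ordinal (hy : (y < k.+1)%N)); rewrite S0.
move=> x xm; case: (leqP x k) => [|kx]; first exact: lowk.
case: k k0 km H {S h2 S0} lowk kx => // k' _ km H lowk kx.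
pose phi := fun l : 'I_k'.+1 => if l == ord_max then x else val l.
have inj : injective phi.
  move=> i j; rewrite /phi.
  case: (eqVneq i ord_max) => [->|ni]; case: (eqVneq j ord_max) => [->|nj] //.
  - move=> xj; exfalso; move: (ltn_ord j); rewrite -xj; lia.
  - move=> ix; exfalso; move: (ltn_ord i); rewrite ix; lia.
  - exact: val_inj.
have lt : forall l, (phi l < m)%N.
  move=> l; rewrite /phi; case: (l == ord_max) => //.
  exact: ltn_trans (ltn_ord l) km.
have := H phi inj lt; rewrite big_ord_recr /= /phi eqxx big1 ?add0r //.
move=> i _.
have -> : (widen_ord (leqnSn k') i == ord_max) = false.
  by apply/eqP => /(congr1 val) /=; move: (ltn_ord i); lia.
apply: lowk; rewrite /=; move: (ltn_ord i); lia.
Qed.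

Lemma EtGE (F : fieldType) n (M : 'M[F]_n) (g : 'I_n -> 'cV[F]_n) i j :
  ((\matrix_(a, b) g b a 0)^T *m M *m (\matrix_(a, b) g b a 0)) i j =
  ip M (g i) (g j).
Proof.
rewrite ipE mxE exchange_big /=; apply: eq_bigr => b _.
rewrite [X in X * _]mxE big_distrl /=; apply: eq_bigr => a _; rewrite !mxE.
by [].
Qed.

Lemma null_zero (R : realType) n (G : 'M[R]_n.+1) (f : nat -> 'cV[R]_n.+1)
  (w0 : 'cV[R[i]]_n.+1) :
  G \in unitmx -> ONf G n.+1 f ->
  (forall x, (x < n.+1)%N -> ip (cG G) (map_mx (@cplx R) (f x)) w0 = 0) ->
  w0 = 0.
Proof.
move=> uG [ON1 ON2] hc.
pose g := fun j : 'I_n.+1 => map_mx (@cplx R) (f j).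
pose E := \matrix_(a, b) g b a 0.
pose D := E^T *m cG G *m E.
have hD : forall i j, D i j = if i == j then cplx (ip G (f i) (f i)) else 0.
  move=> i j; rewrite /D EtGE /g ip_cplx.
  by case: (eqVneq i j) => [->//|nij]; rewrite ON1 ?rmorph0.
have DD : D *m D = 1%:M.
  apply/matrixP => i j; rewrite !mxE (bigD1 i) //= big1 ?addr0.
    rewrite !hD eqxx; case: (eqVneq i j) => [->|nij]; last by rewrite mulr0.
    rewrite -rmorphM /=; case: (ON2 j (ltn_ord j)) => ->.
      by rewrite mulr1 rmorph1.
    by rewrite mulrNN mulr1 rmorph1.
  by move=> l nli; rewrite hD eq_sym (negbTE nli) mul0r.
have [uD _] := mulmx1_unit DD.
move: uD; rewrite /D unitmx_mul => /andP [uEG _].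
have h0 : E^T *m cG G *m w0 = 0.
  apply/matrixP => i j; rewrite (ord1 j) [RHS]mxE -(hc i (ltn_ord i)) /ip.
  rewrite !mxE; apply: eq_bigr => b _; congr (_ * _).
  by rewrite !mxE; apply: eq_bigr => a _; rewrite !mxE.
by rewrite -(mulKmx uEG w0) h0 mulmx0.
Qed.

Theorem theorem1p1 (R : realType) (m : nat) (G : 'M[R]_m) (T : tensor4 R m)
    (k : nat) :
  (2 < m)%N -> G^T = G -> G \in unitmx -> is_alg_curv T ->
  (1 <= k)%N -> (k <= m - 1)%N ->
  k_osserman G T k ->
  forall x : 'cV[R[i]]_m, cnull G x -> nilpotent (jacobi (cG G) (cT T) x).
Proof.
case: m G T => [//|n] G T hm sG uG _ hk1 hkm kOss x hx.
rewrite /nilpotent.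
have [f ONff] := ON_exists sG uG.
case: (eqVneq x 0) => [->|xn0].
  have -> : jacobi (cG G) (cT T) 0 = 0.
    by rewrite -(scale0r (0 : 'cV[R[i]]_n.+1)) jacobiZ expr0n /= scale0r.
  by rewrite expr0n.
pose a := fun j : nat => ip (cG G) (map_mx (@cplx R) (f j)) (map_mx (@cplx R) (f j))
   * ip (cG G) (map_mx (@cplx R) (f j)) x ^+ 2.
have hkm' : (k < n.+1)%N by move: hkm; rewrite subn1 /=; lia.
have [phi [phi_inj [phi_lt hs]]] : exists phi : 'I_k -> nat, injective phi /\
   (forall l, (phi l < n.+1)%N) /\ \sum_(l < k) a (phi l) != 0.
  apply: NNPP => hno.
  have hall : forall phi : 'I_k -> nat, injective phi ->
      (forall l, (phi l < n.+1)%N) -> \sum_(l < k) a (phi l) = 0.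
    move=> phi pi pl; apply/eqP; apply/negPn/negP => hn.
    by apply: hno; exists phi.
  have az := comb hk1 hkm' hall.
  suff : x = 0 by move/eqP; rewrite (negbTE xn0).
  apply: (null_zero uG ONff) => j hj.
  have := az j hj; rewrite /a => /eqP; rewrite mulf_eq0 expf_eq0 /=.
  rewrite ip_cplx fmorph_eq0; case: ONff => _ /(_ j hj) [] ->.
    by rewrite oner_eq0 /= => /eqP.
  by rewrite oppr_eq0 oner_eq0 /= => /eqP.
exact: (J_nil sG kOss ONff phi_inj phi_lt hx hs).
Qed.
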